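(* Let $G=(V,E)$ be a symmetric tree topology and let sets $R,S$ with $|R|=|S|=N/2$ be initially partitioned among the compute nodes, with $N_v$ the number of elements of $R$ and $S$ held by compute node $v$. Any algorithm computing the cartesian product $R\times S$ has (tuple) cost $\Omega(C_{LB})$, where \[C_{LB}=\max_{e\in E}\frac{1}{w_e}\cdot\min\Big\{\sum_{v\in V_e^-}N_v,\ \sum_{v\in V_e^+}N_v\Big\}.\]
   Context: Topology-aware model: the network is a directed graph $G=(V,E)$; each edge $e$ has bandwidth $w_e>0$; $V_C\subseteq V$ are the compute nodes (only they store data and compute; other nodes only route). $G$ is a symmetric tree topology: for every $(u,v)\in E$ also $(v,u)\in E$ with the same bandwidth, and the underlying undirected graph is a tree. The input is partitioned without duplication among the compute nodes; the algorithm knows the topology, bandwidths and local fragment sizes. Computation proceeds in synchronous rounds; in each round compute nodes compute locally and send data along paths. The tuple cost of round $i$ is $\max_e|Y_i(e)|/w_e$ where $|Y_i(e)|$ is the number of elements routed through edge $e$ in round $i$; the total cost is the sum over rounds. For an edge $e=(u,v)$, removing $e$ splits the compute nodes into $V_e^-$ (on $u$'s side) and $V_e^+$ (on $v$'s side). Computing $R\times S$ means every pair $(r,s)$ with $r\in R,s\in S$ is emitted by at least one compute node, which must hold both $r$ and $s$ at that time. *)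

(* Defs.v *)
From HB Require Import structures.
From mathcomp Require Import all_boot all_order all_algebra.
From mathcomp Require Import reals.
From Stdlib Require List.
Set Implicit Arguments. Unset Strict Implicit. Unset Printing Implicit Defensive.
Import Order.TTheory GRing.Theory Num.Theory.

Definition acyclic (V : finType) (E : rel V) : Prop :=
  ~ (exists (x : V) (p : seq V),
        [&& path E x p, E (last x p) x, uniq (x :: p) & 2 < size (x :: p)]).

Definition sym_tree (V : finType) (E : rel V) : Prop :=
  [/\ symmetric E, irreflexive E, (forall x y : V, connect E x y) & acyclic E].

Definition rel_minus (V : finType) (E : rel V) (u v : V) : rel V :=
  [rel x y | E x y && ~~ (((x == u) && (y == v)) || ((x == v) && (y == u)))].

Definition side_minus (V : finType) (E : rel V) (VC : {set V}) (u v : V) : {set V} :=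
  [set c in VC | connect (rel_minus E u v) c u].
Definition side_plus (V : finType) (E : rel V) (VC : {set V}) (u v : V) : {set V} :=
  [set c in VC | connect (rel_minus E u v) c v].

Definition item (TR TS : finType) := (TR + TS)%type.

Definition in_data (TR TS : finType) (R : {set TR}) (S : {set TS}) (d : item TR TS) : bool :=
  match d with inl r => r \in R | inr s => s \in S end.

Definition init_loc (V TR TS : finType) (locR : TR -> V) (locS : TS -> V) (d : item TR TS) : V :=
  match d with inl r => locR r | inr s => locS s end.

Definition Nv (V TR TS : finType) (R : {set TR}) (S : {set TS})
  (locR : TR -> V) (locS : TS -> V) (v : V) : nat :=
  #|[set r in R | locR r == v]| + #|[set s in S | locS s == v]|.

(* a message: source compute node, destination compute node, the element sent,
   and the route src :: route (a walk in the graph ending at dst). *)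
Record msg (V D : Type) := Msg { src : V; dst : V; dat : D; route : seq V }.

Definition round (V D : Type) := seq (msg V D).

Fixpoint holds (V TR TS : finType) (R : {set TR}) (S : {set TS})
  (locR : TR -> V) (locS : TS -> V) (A : seq (round V (item TR TS)))
  (k : nat) (v : V) (d : item TR TS) : bool :=
  match k with
  | 0 => in_data R S d && (init_loc locR locS d == v)
  | k'.+1 => holds R S locR locS A k' v d
             || has (fun m => (dst m == v) && (dat m == d)) (nth [::] A k')
  end.

Definition valid_alg (V TR TS : finType) (E : rel V) (VC : {set V})
  (R : {set TR}) (S : {set TS}) (locR : TR -> V) (locS : TS -> V)
  (A : seq (round V (item TR TS))) : Prop :=
  forall k, k < size A -> forall m, List.In m (nth [::] A k) ->
    [/\ src m \in VC, dst m \in VC, holds R S locR locS A k (src m) (dat m),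
        path E (src m) (route m) & last (src m) (route m) = dst m].

Definition computes_product (V TR TS : finType) (VC : {set V})
  (R : {set TR}) (S : {set TS}) (locR : TR -> V) (locS : TS -> V)
  (A : seq (round V (item TR TS))) : Prop :=
  forall r s, r \in R -> s \in S ->
    exists v k, [/\ v \in VC, k <= size A,
                    holds R S locR locS A k v (inl r) & holds R S locR locS A k v (inr s)].

Definition crosses (V D : eqType) (m : msg V D) (e : V * V) : bool :=
  e \in zip (src m :: route m) (route m).

Definition Y (V TR TS : finType) (rd : round V (item TR TS)) (e : V * V) : {set item TR TS} :=
  [set d | has (fun m => (dat m == d) && crosses m e) rd].

Local Open Scope ring_scope.

Definition cost (K : realType) (V TR TS : finType) (E : rel V) (w : V -> V -> K)
  (A : seq (round V (item TR TS))) : K :=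
  \sum_(i < size A)
     \big[Num.max/0]_(e : V * V | E e.1 e.2) ((#|Y (nth [::] A i) e|)%:R / w e.1 e.2).

Definition C_LB (K : realType) (V TR TS : finType) (E : rel V) (w : V -> V -> K)
  (VC : {set V}) (R : {set TR}) (S : {set TS}) (locR : TR -> V) (locS : TS -> V) : K :=
  \big[Num.max/0]_(e : V * V | E e.1 e.2)
     ((w e.1 e.2)^-1 *
      Num.min (\sum_(v in side_minus E VC e.1 e.2) (Nv R S locR locS v)%:R)
              (\sum_(v in side_plus E VC e.1 e.2) (Nv R S locR locS v)%:R)).

(* Main.v *)
Require Import Defs.
From HB Require Import structures.
From mathcomp Require Import all_boot all_order all_algebra.
From mathcomp Require Import reals.
From mathcomp Require Import zify ring lra.
Import Order.TTheory GRing.Theory Num.Theory.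
Set Implicit Arguments.
Section Graph.
Variables (V : finType) (E : rel V).
Hypothesis Esym : symmetric E.
Variables u v : V.

Lemma rm_sym : symmetric (rel_minus E u v).
Proof.
move=> x y; rewrite /rel_minus /= Esym.
by rewrite [(y == u) && _]andbC [(y == v) && _]andbC orbC.
Qed.

Lemma rm_csym : connect_sym (rel_minus E u v).
Proof. exact: sym_connect_sym rm_sym. Qed.

Lemma path_rm x p : path E x p -> (u,v) \notin zip (x::p) p ->
  (v,u) \notin zip (x::p) p -> path (rel_minus E u v) x p.
Proof.
elim: p x => [//|y p IH] x /= /andP[Exy Hp].
rewrite !in_cons !negb_or => /andP[H1 H2] /andP[H3 H4].
rewrite IH // andbT /rel_minus /= Exy /=.
apply/negP => /orP[/andP[/eqP ? /eqP ?]|/andP[/eqP ? /eqP ?]]; subst.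
  by rewrite eqxx in H1.
by rewrite eqxx in H3.
Qed.

Lemma path_cross x p : path E x p ->
  connect (rel_minus E u v) x (last x p) \/
  (u,v) \in zip (x::p) p \/ (v,u) \in zip (x::p) p.
Proof.
move=> Hp.
case H1: ((u,v) \in zip (x::p) p); first by right; left.
case H2: ((v,u) \in zip (x::p) p); first by right; right.
left; apply/connectP; exists p => //.
by apply: path_rm; rewrite ?H1 ?H2.
Qed.

Lemma cover_path p y : path E y p -> last y p = u ->
  connect (rel_minus E u v) y u || connect (rel_minus E u v) y v.
Proof.
elim: p y => [|z p IH] y /=; first by move=> _ ->; rewrite connect0.
move=> /andP[Eyz Hp] Hl.
case Hr: (rel_minus E u v y z).
  have Hc : connect (rel_minus E u v) y z by apply: connect1.
  case/orP: (IH z Hp Hl) => H; apply/orP; [left|right];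
   exact: connect_trans Hc H.
move: Hr; rewrite /rel_minus /= Eyz /= => /negbFE /orP[/andP[/eqP -> _]|/andP[/eqP -> _]].
  by rewrite connect0.
by rewrite connect0 orbT.
Qed.

Lemma tree_cover x : connect E x u ->
  connect (rel_minus E u v) x u || connect (rel_minus E u v) x v.
Proof. by case/connectP => p Hp Hl; exact: (@cover_path p x Hp (esym Hl)). Qed.

Hypothesis Eirr : irreflexive E.
Hypothesis Eacy : acyclic E.
Hypothesis Euv : E u v.

Lemma disj x : connect (rel_minus E u v) x u -> connect (rel_minus E u v) x v -> False.
Proof.
move=> Hu Hv.
have : connect (rel_minus E u v) u v.
  by apply: connect_trans Hv; rewrite rm_csym.
case/connectP => p Hp Hl.
case/shortenP: Hp Hl => p' Hp' Hu' _ Hl.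
apply: Eacy; exists u, p'.
have HpE : path E u p'.
  by apply: sub_path Hp' => a b /andP[].
rewrite HpE -Hl Esym Euv Hu' /=.
case: p' Hp' Hl {Hu' HpE} => [|z [|z2 p'']] /=.
- move=> _ Huv; move: Euv; by rewrite -Huv Eirr.
- move=> /andP[H _] Hz; move: H; rewrite -Hz /rel_minus /= !eqxx /=.
  by rewrite andbF.
- by [].
Qed.
End Graph.
Lemma has_In (T : Type) (p : pred T) s m : List.In m s -> p m -> has p s.
Proof. elim: s => [//|a s IH] /= [<- ->//|H Hp]; by rewrite IH ?orbT. Qed.

Lemma has_ex (T : Type) (p : pred T) s : has p s -> exists m, List.In m s /\ p m.
Proof.
elim: s => [//|a s IH] /= /orP[H|H]; first by exists a; split; [left|].
by case: (IH H) => m [? ?]; exists m; split; [right|].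
Qed.

Lemma sum_card (V T : finType) (P : {set V}) (B : {set T}) (f : T -> V) :
  \sum_(x in P) #|[set r in B | f r == x]| = #|[set r in B | f r \in P]|.
Proof.
rewrite -sum1_card (partition_big f (mem P)) /=; last first.
  by move=> i; rewrite inE => /andP[].
apply: eq_bigr => x Hx; rewrite -sum1_card; apply: eq_bigl => r.
rewrite !inE; case: eqP => [->|]; by rewrite ?Hx ?andbT ?andbF.
Qed.

Arguments has_ex {T p s}.
Arguments has_In {T p s m}.
Section Alg.
Variables (V : finType) (E : rel V).
Hypothesis Esym : symmetric E.
Variables u v : V.
Variables (VC : {set V}) (TR TS : finType) (R : {set TR}) (S : {set TS})
  (locR : TR -> V) (locS : TS -> V) (A : seq (round V (item TR TS))).
Hypothesis valid : valid_alg E VC R S locR locS A.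

Definition crossing (d : item TR TS) := [exists i : 'I_(size A),
  (d \in Y (nth [::] A i) (u,v)) || (d \in Y (nth [::] A i) (v,u))].

Lemma stay t d :
  (in_data R S d -> init_loc locR locS d \in VC /\
     connect (rel_minus E u v) (init_loc locR locS d) t) ->
  ~~ crossing d -> forall k x, holds R S locR locS A k x d ->
  connect (rel_minus E u v) x t.
Proof.
move=> H0 Hc; elim=> [|k IH] x /=.
  by case/andP=> Hd /eqP <-; case: (H0 Hd).
case/orP; first exact: IH.
move=> Hh.
have Hk : k < size A.
  rewrite ltnNge; apply/negP => Hle; move: Hh; by rewrite nth_default.
case: (has_ex Hh) => m [Hin /andP[/eqP Hdst /eqP Hdat]].
case: (@valid k Hk m Hin) => _ _ Hsrc Hpath Hlast.
rewrite Hdat in Hsrc.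
have Hs := IH _ Hsrc.
case: (@path_cross _ E u v _ _ Hpath) => [Hcon | Hcr].
  rewrite -Hdst -Hlast; apply: connect_trans Hs.
  by rewrite (rm_csym _ Esym).
exfalso; move/existsPn: Hc => /(_ (Ordinal Hk)) /=; rewrite !inE negb_or.
case/andP => H1 H2.
case: Hcr => Hcr; [move/negP: H1|move/negP: H2]; apply;
  apply: (has_In Hin); by rewrite Hdat eqxx.
Qed.

Hypothesis prod : computes_product VC R S locR locS A.
Hypothesis hR : forall r, r \in R -> locR r \in VC.
Hypothesis hS : forall s, s \in S -> locS s \in VC.

Let rm := rel_minus E u v.

Lemma pair_cross a b r s : (forall x, connect rm x a -> connect rm x b -> False) ->
  r \in R -> s \in S -> connect rm (locR r) a -> connect rm (locS s) b ->
  crossing (inl r) || crossing (inr s).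
Proof.
move=> Hd rR sS Ha Hb.
case: (prod rR sS) => x [k [_ _ H1 H2]].
case C1: (crossing (inl r)) => //; case C2: (crossing (inr s)) => //; exfalso.
apply: (Hd x).
  by apply: (@stay a (inl r) _ (negbT C1) k x H1) => /= _; split; [apply: hR|].
by apply: (@stay b (inr s) _ (negbT C2) k x H2) => /= _; split; [apply: hS|].
Qed.

Definition X := [set d | crossing d].
Definition XR := [set r | crossing (inl r)].
Definition XS := [set s | crossing (inr s)].
Definition sR t := [set r in R | connect rm (locR r) t].
Definition sS t := [set s in S | connect rm (locS s) t].

Lemma cardX : #|XR| + #|XS| <= #|X|.
Proof.
have inlI : injective (@inl TR TS) by move=> a b [].
have inrI : injective (@inr TR TS) by move=> a b [].
rewrite -(card_imset _ inlI) -(card_imset _ inrI).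
have -> : #|(@inl TR TS) @: XR| + #|(@inr TR TS) @: XS| = #|(@inl TR TS) @: XR :|: (@inr TR TS) @: XS|.
  apply/eqP; rewrite eq_sym (leq_card_setU _ _).2.
  apply/pred0P => d /=; apply/andP => -[/imsetP[a _ ->] /imsetP[b _]] //.
apply: subset_leq_card; apply/subsetP => d; rewrite !inE.
by case/orP => /imsetP[a]; rewrite inE => H ->.
Qed.

Lemma key a b : (forall x, connect rm x a -> connect rm x b -> False) ->
  sR a \subset XR \/ sS b \subset XS.
Proof.
move=> Hd; case: (boolP (sR a \subset XR)) => H; first by left.
right; case/subsetPn: H => r; rewrite !inE => /andP[rR ra] rX.
apply/subsetP => s; rewrite !inE => /andP[sS sb].
by move: (@pair_cross a b r s Hd rR sS ra sb); rewrite (negbTE rX).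
Qed.

Hypothesis Eirr : irreflexive E.
Hypothesis Eacy : acyclic E.
Hypothesis Euv : E u v.
Hypothesis Econ : forall x y, connect E x y.
Hypothesis RS : #|R| = #|S|.

Lemma nat_bound : #|sR u| + #|sS u| <= 2 * #|X| \/ #|sR v| + #|sS v| <= 2 * #|X|.
Proof.
have D1 : forall x, connect rm x u -> connect rm x v -> False := @disj _ _ Esym u v Eirr Eacy Euv.
have D2 : forall x, connect rm x v -> connect rm x u -> False.
  by move=> x H1 H2; exact: D1 H2 H1.
have CX := cardX.
have cR : R \subset sR u :|: sR v.
  apply/subsetP => r rR; rewrite !inE rR /=. exact: (@tree_cover _ E u v _ (Econ _ _)).
have cS : S \subset sS u :|: sS v.
  apply/subsetP => s sS; rewrite !inE sS /=; exact: (@tree_cover _ E u v _ (Econ _ _)).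
have sub1 : forall t, #|sR t| <= #|R|.
  by move=> t; apply: subset_leq_card; apply/subsetP => r; rewrite inE => /andP[].
have sub2 : forall t, #|sS t| <= #|S|.
  by move=> t; apply: subset_leq_card; apply/subsetP => r; rewrite inE => /andP[].
have := sub1 u; have := sub1 v; have := sub2 u; have := sub2 v.
case: (@key u v D1) => H1; case: (@key v u D2) => H2.
- have : R \subset XR.
    by apply: subset_trans cR _; rewrite subUset H1 H2.
  move/subset_leq_card; lia.
- have := subset_leq_card H1; have := subset_leq_card H2; lia.
- have := subset_leq_card H1; have := subset_leq_card H2; lia.
- have : S \subset XS.
    by apply: subset_trans cS _; rewrite subUset H2 H1.
  move/subset_leq_card; lia.
Qed.

End Alg.
Lemma cardX_le (V : finType) (u v : V) (TR TS : finType) (A : seq (round V (item TR TS))) :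
  #|X _ u v A| <= \sum_(i < size A) (#|Y (nth [::] A i) (u,v)| + #|Y (nth [::] A i) (v,u)|).
Proof.
apply: leq_trans (subset_leq_card (B := \bigcup_(i < size A) (Y (nth [::] A i) (u,v) :|: Y (nth [::] A i) (v,u))) _) _.
  apply/subsetP => d; rewrite inE => /existsP[i Hi]; apply/bigcupP; exists i => //.
  by rewrite inE.
apply: (big_ind2 (fun (B : {set item TR TS}) n => #|B| <= n)).
- by rewrite cards0.
- move=> B1 n1 B2 n2 h1 h2; apply: leq_trans (leq_card_setU B1 B2).1 _.
  exact: leq_add.
- by move=> i _; exact: (leq_card_setU _ _).1.
Qed.

Local Open Scope ring_scope.

Section Real.
Variables (K : realType) (V : finType) (E : rel V) (w : V -> V -> K).
Hypothesis wpos : forall x y, E x y -> 0 < w x y /\ w x y = w y x.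
Variables (TR TS : finType) (A : seq (round V (item TR TS))).

Lemma cost_ge0 : 0 <= cost E w A.
Proof.
apply: sumr_ge0 => i _; elim/big_ind: _ => //.
  by move=> x y hx hy; rewrite le_max hx.
move=> e He; apply: divr_ge0 => //; apply: ltW; exact: (wpos He).1.
Qed.

Lemma cost_ge (e : V * V) : E e.1 e.2 ->
  \sum_(i < size A) (#|Y (nth [::] A i) e|)%:R / w e.1 e.2 <= cost E w A.
Proof.
move=> He; rewrite /cost; apply: ler_sum => i _.
by rewrite (bigD1 e) //= le_max lexx.
Qed.
End Real.

Theorem theorem3 (K : realType) :
  exists c : K, 0 < c /\
  forall (V : finType) (E : rel V) (w : V -> V -> K) (VC : {set V})
         (TR TS : finType) (R : {set TR}) (S : {set TS})
         (locR : TR -> V) (locS : TS -> V)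
         (A : seq (round V (item TR TS))),
    sym_tree E ->
    (forall x y, E x y -> 0 < w x y /\ w x y = w y x) ->
    #|R| = #|S| ->
    (forall r, r \in R -> locR r \in VC) ->
    (forall s, s \in S -> locS s \in VC) ->
    valid_alg E VC R S locR locS A ->
    computes_product VC R S locR locS A ->
    c * C_LB E w VC R S locR locS <= cost E w A.
Proof.
exists (4^-1); split; first by rewrite invr_gt0 ltr0n.
move=> V E w VC TR TS R S locR locS A [Esym Eirr Econ Eacy] hw RS hR hS valid prod.
have c0 := @cost_ge0 _ _ E w hw TR TS A.
suff H : C_LB E w VC R S locR locS <= 4 * cost E w A.
  apply: le_trans (ler_wpM2l _ H) _; first by rewrite invr_ge0 ler0n.
  by rewrite mulrA mulVf ?mul1r // pnatr_eq0.
rewrite /C_LB; elim/big_ind: _.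
- by apply: mulr_ge0.
- by move=> x y hx hy; rewrite ge_max hx hy.
case=> u v /= Euv.
have hsum : forall t, \sum_(x in [set c in VC | connect (rel_minus E u v) c t])
    Nv R S locR locS x = (#|sR _ E u v R locR t| + #|sS _ E u v S locS t|)%N.
  move=> t; rewrite big_split /= !sum_card /sR /sS; congr (_ + _)%N; apply: eq_card => r;
   rewrite !inE; [case rR: (r \in R) | case rR: (r \in S)] => //=;
   by rewrite ?hR ?hS.
rewrite /side_minus /side_plus -!natr_sum !hsum.
have NB : (#|sR _ E u v R locR u| + #|sS _ E u v S locS u| <= 2 * #|X _ u v A|)%N \/
          (#|sR _ E u v R locR v| + #|sS _ E u v S locS v| <= 2 * #|X _ u v A|)%N.
  apply: (@nat_bound V E Esym u v VC TR TS R S locR locS A valid prod hR hS Eirr Eacy Euv Econ RS).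
have hmin : Num.min (#|sR _ E u v R locR u| + #|sS _ E u v S locS u|)%:R
                    (#|sR _ E u v R locR v| + #|sS _ E u v S locS v|)%:R
            <= (2 * #|X _ u v A|)%:R :> K.
  by case: NB => h; rewrite ge_min !ler_nat h ?orbT.
have hXZ := @cardX_le V u v TR TS A.
have [w0 wsym] := hw u v Euv.
set Z := (\sum_(i < size A) _)%N in hXZ.
apply: (@le_trans _ _ ((w u v)^-1 * (2 * Z)%:R)).
  apply: ler_wpM2l; first by rewrite invr_ge0 ltW.
  by apply: le_trans hmin _; rewrite ler_nat leq_mul2l hXZ orbT.
have c1 := @cost_ge _ _ E w TR TS A (u,v) Euv.
have Evu : E v u by rewrite Esym.
have c2 := @cost_ge _ _ E w TR TS A (v,u) Evu.
rewrite /= -wsym in c2.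
have -> : (w u v)^-1 * (2 * Z)%:R =
   2 * (\sum_(i < size A) (#|Y (nth [::] A i) (u,v)|)%:R / w u v +
        \sum_(i < size A) (#|Y (nth [::] A i) (v,u)|)%:R / w u v).
  rewrite natrM mulrCA; congr (_ * _).
  rewrite /Z natr_sum mulr_sumr -big_split /=; apply: eq_bigr => i _.
  by rewrite natrD mulrDr ![_^-1 * _]mulrC.
move: c1 c2 c0 => /=; lra.
Qed.
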